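(* For every composite positive integer $n$ the following are equivalent: (i) $n$ is a Gaussian Carmichael number; (ii) $\Lambda(n)$ divides $\mathcal{F}(n)$; (iii) for every prime divisor $p$ of $n$, $\mathcal{F}(p)$ divides $\mathcal{F}(n)$, and one of the following holds: (a) $n$ is odd and square-free; (b) $4\mid n$ and $n/4\in\{2,3,5\}$ or $n/4$ is not a prime.
   Context: For a positive integer $n$, $\mathcal{G}_n=\{a+bi\in\mathbb{Z}[i]/n\mathbb{Z}[i] : a^2+b^2\equiv 1\pmod n\}$ (a multiplicative group), and $\Lambda(n)$ is the exponent of $\mathcal{G}_n$. The function $\mathcal{F}$ is defined by $\mathcal{F}(n)=n-1$ if $n\equiv 1\pmod 4$, $\mathcal{F}(n)=n+1$ if $n\equiv 3 \pmod 4$, $\mathcal{F}(n)=n$ otherwise. A composite integer $n$ is a Gaussian Fermat pseudoprime to base $z\in\mathbb{Z}[i]$ if $\gcd(n,z\overline{z})=1$ and $(z/\overline{z})^{\mathcal{F}(n)}\equiv 1\pmod n$ in $\mathbb{Z}[i]/n\mathbb{Z}[i]$. A composite $n$ is a Gaussian Carmichael number if it is a Gaussian Fermat pseudoprime to base $z$ for every $z\in\mathbb{Z}[i]$ with $\gcd(n,z\overline{z})=1$. *)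

(* Defs.v *)
(* Gaussian integers Z[i] are represented as pairs of ints
   (a, b) standing for a + b i; residues in Z[i]/nZ[i] are handled through
   componentwise congruence modulo n. *)
From HB Require Import structures.
From mathcomp Require Import all_boot all_order all_algebra.
From Stdlib Require Import ClassicalEpsilon.
Set Implicit Arguments. Unset Strict Implicit. Unset Printing Implicit Defensive.
Import Order.TTheory GRing.Theory Num.Theory.

Local Open Scope ring_scope.

Definition gauss := (int * int)%type.

Definition gone : gauss := (1, 0).
Definition gmul (z w : gauss) : gauss :=
  (z.1 * w.1 - z.2 * w.2, z.1 * w.2 + z.2 * w.1).
Definition gconj (z : gauss) : gauss := (z.1, - z.2).
Definition gnorm (z : gauss) : int := z.1 ^+ 2 + z.2 ^+ 2.
Definition gpow (z : gauss) (k : nat) : gauss := iter k (gmul z) gone.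

Definition gcong (n : nat) (z w : gauss) : bool :=
  ((z.1 == w.1 %[mod n])%Z && (z.2 == w.2 %[mod n])%Z).

Definition inGn (n : nat) (g : gauss) : bool :=
  (gnorm g == 1 %[mod n])%Z.

(* Lambda(n): the exponent of G_n, i.e. the least m > 0 with g^m = 1
   for every g in G_n (chosen by epsilon; such m exists since G_n is finite). *)
Definition is_exponent_Gn (n m : nat) : Prop :=
  (0 < m)%N /\ (forall g, inGn n g -> gcong n (gpow g m) gone) /\
  (forall m', (0 < m')%N -> (forall g, inGn n g -> gcong n (gpow g m') gone) ->
              (m <= m')%N).

Definition Lambda (n : nat) : nat :=
  epsilon (inhabits 0%N) (is_exponent_Gn n).

Local Close Scope ring_scope.

Definition FF (n : nat) : nat :=
  if n %% 4 == 1 then n.-1 else if n %% 4 == 3 then n.+1 else n.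

Definition composite (n : nat) : bool := (1 < n) && ~~ prime n.

(* (z / conj z)^F(n) = 1 in Z[i]/nZ[i]: w is the inverse of conj z mod n *)
Definition quot_pow_one (n : nat) (z : gauss) (k : nat) : Prop :=
  exists w : gauss, gcong n (gmul (gconj z) w) gone /\
                    gcong n (gpow (gmul z w) k) gone.

Definition gauss_fermat_psp (n : nat) (z : gauss) : Prop :=
  composite n /\ coprimez (n%:Z) (gnorm z) /\ quot_pow_one n z (FF n).

Definition gauss_carmichael (n : nat) : Prop :=
  composite n /\
  forall z : gauss, coprimez (n%:Z) (gnorm z) -> gauss_fermat_psp n z.

Definition squarefree_nat (n : nat) : bool :=
  [forall p : 'I_n.+1, prime p ==> ~~ (p ^ 2 %| n)].

(* Main.v *)
From Pilot Require Import Defs.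
From HB Require Import structures.
From mathcomp Require Import all_boot all_order all_algebra all_fingroup all_solvable all_field.
From mathcomp Require Import ring lra zify.
From Stdlib Require Import ClassicalEpsilon Classical.
Import Pilot.Defs.
Set Implicit Arguments. Unset Strict Implicit. Unset Printing Implicit Defensive.
Import Order.TTheory GRing.Theory Num.Theory FinRing.Theory.

Section GaussAlg.
Local Open Scope ring_scope.

Lemma dvdzD' (d a b : int) : (d %| a)%Z -> (d %| b)%Z -> (d %| a + b)%Z.
Proof. by move=> ha hb; apply: rpredD. Qed.
Lemma dvdzN' (d a : int) : (d %| - a)%Z = (d %| a)%Z.
Proof. by rewrite rpredN. Qed.
Lemma dvdzB' (d a b : int) : (d %| a)%Z -> (d %| b)%Z -> (d %| a - b)%Z.
Proof. by move=> ha hb; apply: rpredB. Qed.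
Lemma dvdz0' (d : int) : (d %| 0)%Z.
Proof. exact: rpred0. Qed.

Lemma gmulC z w : gmul z w = gmul w z.
Proof. by case: z w => a b [c d]; rewrite /gmul /=; congr pair; ring. Qed.
Lemma gmulA z w u : gmul z (gmul w u) = gmul (gmul z w) u.
Proof. by case: z w u => a b [c d] [e f]; rewrite /gmul /=; congr pair; ring. Qed.
Lemma gmul1 z : gmul gone z = z.
Proof. by case: z => a b; rewrite /gmul /=; congr pair; ring. Qed.
Lemma gmul1r z : gmul z gone = z.
Proof. by rewrite gmulC gmul1. Qed.

Lemma gpowS z k : gpow z k.+1 = gmul z (gpow z k).
Proof. by []. Qed.
Lemma gpow0 z : gpow z 0 = gone. Proof. by []. Qed.
Lemma gpowD z m k : gpow z (m + k) = gmul (gpow z m) (gpow z k).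
Proof. elim: m => [|m IH]; first by rewrite add0n gpow0 gmul1.
by rewrite addSn !gpowS IH gmulA. Qed.
Lemma gpowM z m k : gpow z (m * k) = gpow (gpow z m) k.
Proof. elim: k => [|k IH]; first by rewrite muln0.
by rewrite mulnS gpowD IH gpowS. Qed.
Lemma gpow_mul z w k : gpow (gmul z w) k = gmul (gpow z k) (gpow w k).
Proof. elim: k => [|k IH]; first by rewrite !gpow0 gmul1.
rewrite !gpowS IH !gmulA; congr gmul; rewrite -!gmulA; congr gmul; exact: gmulC. Qed.
Lemma gpow1 k : gpow gone k = gone.
Proof. by elim: k => // k IH; rewrite gpowS IH gmul1. Qed.
Lemma gconj_mul z w : gconj (gmul z w) = gmul (gconj z) (gconj w).
Proof. by case: z w => a b [c d]; rewrite /gmul /gconj /=; congr pair; ring. Qed.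
Lemma gconj_pow z k : gconj (gpow z k) = gpow (gconj z) k.
Proof. by elim: k => // k IH; rewrite !gpowS gconj_mul IH. Qed.
Lemma gnormM z w : gnorm (gmul z w) = gnorm z * gnorm w.
Proof. by case: z w => a b [c d]; rewrite /gmul /gnorm /=; ring. Qed.
Lemma gmul_conj z : gmul z (gconj z) = (gnorm z, 0).
Proof. by case: z => a b; rewrite /gmul /gconj /gnorm /=; congr pair; ring. Qed.

Lemma gcongE n z w : gcong n z w = (n %| z.1 - w.1)%Z && (n %| z.2 - w.2)%Z.
Proof. by rewrite /gcong !eqz_mod_dvd. Qed.

Lemma gcong_refl n z : gcong n z z.
Proof. by rewrite gcongE !subrr dvdz0'. Qed.
Lemma gcong_sym n z w : gcong n z w -> gcong n w z.
Proof. rewrite !gcongE => /andP[h1 h2].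
by rewrite -opprB dvdzN' h1 -opprB dvdzN' h2. Qed.
Lemma gcong_trans n z w u : gcong n z w -> gcong n w u -> gcong n z u.
Proof. rewrite !gcongE => /andP[h1 h2] /andP[h3 h4].
have -> : z.1 - u.1 = (z.1 - w.1) + (w.1 - u.1) by ring.
have -> : z.2 - u.2 = (z.2 - w.2) + (w.2 - u.2) by ring.
by apply/andP; split; apply: dvdzD'. Qed.
Lemma gcong_mul n z z' w w' : gcong n z z' -> gcong n w w' ->
  gcong n (gmul z w) (gmul z' w').
Proof. case: z z' w w' => a b [a' b'] [c d] [c' d']; rewrite !gcongE /gmul /=.
move=> /andP[h1 h2] /andP[h3 h4].
have -> : a * c - b * d - (a' * c' - b' * d') =
  (a - a') * c + a' * (c - c') - ((b - b') * d + b' * (d - d')) by ring.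
have -> : a * d + b * c - (a' * d' + b' * c') =
  (a - a') * d + a' * (d - d') + ((b - b') * c + b' * (c - c')) by ring.
apply/andP; split; [apply: dvdzB'|apply: dvdzD'];
  apply: dvdzD'; first [by apply: dvdz_mulr | by apply: dvdz_mull]. Qed.
Lemma gcong_pow n z z' k : gcong n z z' -> gcong n (gpow z k) (gpow z' k).
Proof. move=> h; elim: k => [|k IH]; first exact: gcong_refl.
by rewrite !gpowS; apply: gcong_mul. Qed.
Lemma gcong_conj n z z' : gcong n z z' -> gcong n (gconj z) (gconj z').
Proof. rewrite !gcongE /gconj /= => /andP[-> h] /=.
have -> : (- z.2 - - z'.2) = - (z.2 - z'.2) by ring.
by rewrite dvdzN'. Qed.
Lemma gcong_dvd m n z w : (m %| n)%N -> gcong n z w -> gcong m z w.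
Proof. move=> mn; rewrite !gcongE => /andP[h1 h2].
have mnz : (m%:Z %| n%:Z)%Z by rewrite dvdzE.
by rewrite (dvdz_trans mnz h1) (dvdz_trans mnz h2). Qed.

End GaussAlg.


Section Hom.
Local Open Scope ring_scope.
Variable R : comNzRingType.
Variable j : R.
Hypothesis hj : j ^+ 2 = -1.

Definition hg (z : gauss) : R := z.1%:~R + z.2%:~R * j.

Lemma hg1 : hg gone = 1.
Proof. by rewrite /hg /= mul0r addr0. Qed.

Lemma hgM z w : hg (gmul z w) = hg z * hg w.
Proof.
have key : forall A B C D : R, A*C - B*D + (A*D+B*C)*j = (A + B*j)*(C+D*j).
  move=> A B C D; apply/eqP; rewrite -subr_eq0; apply/eqP.
  have -> : A*C - B*D + (A*D+B*C)*j - (A + B*j)*(C+D*j) = -(B*D)*(j^+2+1) by ring.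
  by rewrite hj addNr mulr0.
case: z w => a b [c d]; rewrite /hg /gmul /=.
rewrite -key; congr (_ + _); rewrite ?rmorphB ?rmorphD ?rmorphM /= ?intrM ?intrD ?intrB /=; try done. 
Qed.

Lemma hgX z k : hg (gpow z k) = hg z ^+ k.
Proof. elim: k => [|k IH]; first by rewrite hg1 expr0.
by rewrite gpowS hgM IH exprS. Qed.

Lemma hg_conj z : hg (gconj z) = z.1%:~R - z.2%:~R * j.
Proof. by rewrite /hg /gconj /= intrN mulNr. Qed.

Lemma hg_norm z : hg z * hg (gconj z) = (gnorm z)%:~R.
Proof. rewrite -hgM gmul_conj /hg /= mul0r addr0. done. Qed.

Lemma hg_cong (p : nat) z w : p \in [pchar R] -> gcong p z w -> hg z = hg w.
Proof.
move=> pc; rewrite gcongE => /andP[h1 h2].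
rewrite (dvdz_pcharf pc) intrB subr_eq0 in h1; rewrite (dvdz_pcharf pc) intrB subr_eq0 in h2.
move: h1 h2 => /eqP h1 /eqP h2.
by rewrite /hg h1 h2.
Qed.

End Hom.

Section FinF.
Local Open Scope ring_scope.
Variable F : finFieldType.

Lemma unit_gen : exists u : F, u != 0 /\ forall d, (u ^+ d == 1) = (#|F|.-1 %| d)%N.
Proof.
have /cyclicP[u defG] := field_unit_group_cyclic [set: {unit F}]%G.
exists (val u); split; first by rewrite -unitfE (valP u).
move=> d; have ou : #[u]%g = #|F|.-1 by rewrite /order -defG card_finField_unit.
by rewrite -ou order_dvdn -val_unitX -val_unit1 val_eqE.
Qed.

Lemma unit_exp d : (forall x : F, x != 0 -> x ^+ d = 1) -> (#|F|.-1 %| d)%N.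
Proof. by case: unit_gen => u [u0 hu] h; rewrite -hu h. Qed.

Lemma sqrt_m1 : (4 %| #|F|.-1)%N -> (-1 : F) != 1 -> exists j : F, j ^+ 2 = -1.
Proof.
move=> h4 m1; case: unit_gen => u [u0 hu].
exists (u ^+ (#|F|.-1 %/ 4)).
have q0 : (0 < #|F|.-1)%N by rewrite -ltnS prednK ?finNzRing_gt1 // ltnW ?finNzRing_gt1.
have e4 : (u ^+ (#|F|.-1 %/ 4)) ^+ 2 ^+ 2 = 1.
  by rewrite -!exprM divnK //; apply/eqP; rewrite hu.
have : ((u ^+ (#|F|.-1 %/ 4)) ^+ 2) ^+ 2 == 1 by rewrite e4.
rewrite sqrf_eq1 => /orP[/eqP e1|/eqP //].
exfalso; move: e1 => /eqP; rewrite -exprM hu => /dvdn_leq.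
have : (0 < #|F|.-1 %/ 4)%N by rewrite divn_gt0 // dvdn_leq.
move: (#|F|.-1) h4 q0 => q /dvdnP[k ->] q0.
rewrite mulnK // => k0; rewrite muln_gt0 k0 /=; lia.
Qed.

End FinF.


Lemma small_modp (p a b : nat) : (a < p)%N -> (b < p)%N -> (p%:Z %| (a%:Z - b%:Z)%R)%Z -> a = b.
Proof.
move=> ha hb; rewrite dvdzE /= => h.
case: (eqVneq a b) => // ne; exfalso.
have := dvdn_leq _ h. lia.
Qed.

Section OddChar.
Local Open Scope ring_scope.
Variable F : finFieldType.
Variable p : nat.
Hypothesis pc : p \in [pchar F].
Hypothesis podd : odd p.

Lemma two_neq0 : (2%:R : F) != 0.
Proof. rewrite -(dvdn_pcharf pc); apply/negP => /dvdn_leq h.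
have pp := pcharf_prime pc; have := prime_gt1 pp.
have {}h := h isT; move: podd; case: p h pp => [|[|[|q]]] //=; lia.
Qed.

Lemma m1_neq1 : (-1 : F) != 1.
Proof. apply/negP => /eqP h; move: two_neq0.
have -> : (2%:R : F) = 1 + 1 by rewrite mulr2n.
by rewrite -{1}h addNr eqxx. Qed.

Lemma int_frob (x : int) : (x%:~R : F) ^+ p = x%:~R.
Proof. by rewrite -(pFrobenius_autE pc) pFrobenius_aut_int. Qed.

Lemma zero_int (x : int) : ((x%:~R : F) == 0) = (p %| x)%Z.
Proof. by rewrite (dvdz_pcharf pc). Qed.

End OddChar.

Section P1.
Local Open Scope ring_scope.
Variable F : finFieldType.
Variable p : nat.
Hypothesis pc : p \in [pchar F].
Hypothesis podd : odd p.
Variable s : F.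
Hypothesis hs : s ^+ 2 = -1.

Lemma s_neq0 : s != 0.
Proof. apply/eqP => s0; move: hs; rewrite s0 expr0n /= => /eqP.
by rewrite eq_sym oppr_eq0 oner_eq0. Qed.

Lemma K1 (x y : int) : x%:~R + y%:~R * s = 0 :> F -> x%:~R - y%:~R * s = 0 :> F ->
  (p %| x)%Z /\ (p %| y)%Z.
Proof.
move=> e1 e2.
have ex : (x%:~R : F) * 2%:R = (x%:~R + y%:~R * s) + (x%:~R - y%:~R * s) by ring.
rewrite e1 e2 addr0 in ex.
move/eqP: ex; rewrite mulf_eq0 (negbTE (two_neq0 pc podd)) orbF => /eqP ex.
move/eqP: e1; rewrite ex add0r mulf_eq0 (negbTE s_neq0) orbF => hy.
by split; rewrite -(zero_int pc) ?ex ?hy.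
Qed.

Lemma K1g w : hg s w = 1 -> hg s (gconj w) = 1 -> gcong p w gone.
Proof.
move=> e1 e2; rewrite gcongE /=.
have f1 : (w.1 - 1)%:~R + (w.2 - 0)%:~R * s = 0 :> F.
  transitivity (hg s w - 1); last by rewrite e1 subrr.
  rewrite subr0 intrB /hg /=; ring.
have f2 : (w.1 - 1)%:~R - (w.2 - 0)%:~R * s = 0 :> F.
  transitivity (hg s (gconj w) - 1); last by rewrite e2 subrr.
  rewrite subr0 intrB hg_conj /=; ring.
have [h1 h2] := K1 f1 f2.
by rewrite h1 h2.
Qed.

Hypothesis cardF : #|F| = p.

Lemma norm1_int (g : gauss) : (gnorm g == 1 %[mod p])%Z -> (gnorm g)%:~R = 1 :> F.
Proof. rewrite eqz_mod_dvd -(zero_int pc) intrB subr_eq0 => /eqP ->. done. Qed.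

Lemma fermat1 (x : F) : x != 0 -> x ^+ p.-1 = 1.
Proof.
move=> x0; have e := expf_card x.
have p0 : (0 < p)%N by rewrite prime_gt0 ?(pcharf_prime pc).
rewrite cardF -(prednK p0) exprS in e.
by apply: (mulfI x0); rewrite mulr1.
Qed.

Lemma UB1 g : (gnorm g == 1 %[mod p])%Z -> gcong p (gpow g p.-1) gone.
Proof.
move=> /norm1_int hn.
have hAB := hg_norm hs g; rewrite hn in hAB.
have A0 : hg s g != 0 by apply/eqP => e; move: hAB; rewrite e mul0r => /eqP; rewrite eq_sym oner_eq0.
have B0 : hg s (gconj g) != 0 by apply/eqP => e; move: hAB; rewrite e mulr0 => /eqP; rewrite eq_sym oner_eq0.
apply: K1g; first by rewrite hgX // fermat1.
by rewrite gconj_pow hgX // fermat1.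
Qed.

Lemma LB1 k : (forall z, ~~ (p %| gnorm z)%Z -> gcong p (gpow z k) (gpow (gconj z) k)) ->
  (p.-1 %| k)%N.
Proof.
move=> hD; rewrite -cardF; apply: unit_exp => x x0.
pose f := fun ab : 'I_p * 'I_p =>
  (hg s (Posz ab.1, Posz ab.2), hg s (gconj (Posz ab.1, Posz ab.2))).
have finj : injective f.
  move=> [a b] [a' b'] [e1 e2].
  have f1 : (a%:Z - a'%:Z)%:~R + (b%:Z - b'%:Z)%:~R * s = 0 :> F.
    transitivity (hg s (Posz a, Posz b) - hg s (Posz a', Posz b')); last by rewrite e1 subrr.
    rewrite !intrB /hg /=; ring.
  have f2 : (a%:Z - a'%:Z)%:~R - (b%:Z - b'%:Z)%:~R * s = 0 :> F.
    transitivity (hg s (gconj (Posz a, Posz b)) - hg s (gconj (Posz a', Posz b'))); last by rewrite e2 subrr.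
    rewrite !intrB !hg_conj /=; ring.
  have [h1 h2] := K1 f1 f2.
  have ea := small_modp (ltn_ord a) (ltn_ord a') h1.
  have eb := small_modp (ltn_ord b) (ltn_ord b') h2.
  by congr pair; apply: val_inj.
have hc : (#|{: F * F}| <= #|{: 'I_p * 'I_p}|)%N by rewrite !card_prod card_ord cardF.
have /codomP[[a b] /= [e1 e2]] := inj_card_onto finj hc (x, 1).
set z := (Posz a, Posz b) in e1 e2.
have nz : ~~ (p %| gnorm z)%Z by rewrite -(zero_int pc) -(hg_norm hs) -e1 -e2 mulr1.
have := hg_cong s pc (hD z nz); rewrite !hgX // -e1 -e2 expr1n. done.
Qed.

End P1.

Section P3.
Local Open Scope ring_scope.
Variable F : finFieldType.
Variable p : nat.
Hypothesis pc : p \in [pchar F].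
Hypothesis p3 : (p %% 4 = 3)%N.
Variable j : F.
Hypothesis hj : j ^+ 2 = -1.
Hypothesis cardF : #|F| = (p ^ 2)%N.

Let podd : odd p.
Proof. by rewrite (divn_eq p 4) p3 oddD oddM andbF. Qed.

Lemma jp : j ^+ p = - j.
Proof.
rewrite (divn_eq p 4) p3 exprD mulnC exprM.
have -> : j ^+ 4 = 1 by rewrite (_ : 4 = 2 * 2)%N // exprM hj sqrrN expr1n.
by rewrite expr1n mul1r exprS hj mulrN1.
Qed.

Lemma frob_hg z : hg j z ^+ p = hg j (gconj z).
Proof.
rewrite /hg -(pFrobenius_autE pc) rmorphD rmorphM /= !(pFrobenius_autE pc).
by rewrite !(int_frob pc) jp /hg /gconj /= intrN mulrN mulNr.
Qed.

Lemma K3g w : hg j w = 1 -> gcong p w gone.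
Proof.
move=> e; apply: (K1g pc podd hj) => //.
by rewrite -frob_hg e expr1n.
Qed.

Lemma K3 (x y : int) : x%:~R + y%:~R * j = 0 :> F -> (p %| x)%Z /\ (p %| y)%Z.
Proof.
move=> e; apply: (K1 pc podd hj e).
have := frob_hg (x, y); rewrite hg_conj /hg /= e expr0n /=.
have -> : (p == 0)%N = false by case: (p) podd.
by move=> <-.
Qed.

Lemma UB3 g : (gnorm g == 1 %[mod p])%Z -> gcong p (gpow g p.+1) gone.
Proof.
move=> /(norm1_int pc) hn; apply: K3g.
by rewrite hgX // exprSr frob_hg mulrC hg_norm.
Qed.

Lemma LB3 k : (forall z, ~~ (p %| gnorm z)%Z -> gcong p (gpow z k) (gpow (gconj z) k)) ->
  (p.+1 %| k)%N.
Proof.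
move=> hD.
have p1 : (0 < p.-1)%N by move: p3; case: (p) => [|[|q]] //.
rewrite -(dvdn_pmul2l p1).
have -> : (p.-1 * p.+1 = #|F|.-1)%N.
  by rewrite cardF; move: p1; case: (p) => [|q] //= _; rewrite expn1; nia.
apply: unit_exp => y y0.
pose f := fun ab : 'I_p * 'I_p => hg j (Posz ab.1, Posz ab.2).
have finj : injective f.
  move=> [a b] [a' b'] e1; rewrite /f /= in e1.
  have f1 : (a%:Z - a'%:Z)%:~R + (b%:Z - b'%:Z)%:~R * j = 0 :> F.
    transitivity (hg j (Posz a, Posz b) - hg j (Posz a', Posz b')); last by rewrite e1 subrr.
    rewrite !intrB /hg /=; ring.
  have [h1 h2] := K3 f1.
  have ea := small_modp (ltn_ord a) (ltn_ord a') h1.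
  have eb := small_modp (ltn_ord b) (ltn_ord b') h2.
  by congr pair; apply: val_inj.
have hc : (#|{: F}| <= #|{: 'I_p * 'I_p}|)%N by rewrite !card_prod card_ord cardF.
have /codomP[[a b] /= e1] := inj_card_onto finj hc y.
rewrite /f /= in e1; set z := (Posz a, Posz b) in e1.
have nz : ~~ (p %| gnorm z)%Z.
  by rewrite -(zero_int pc) -(hg_norm hj) -frob_hg -e1 mulf_neq0 ?expf_neq0.
have := hg_cong j pc (hD z nz); rewrite !hgX // -frob_hg -e1 -exprM.
have p0 : (0 < p)%N by case: (p) p1.
have -> : (p * k = p.-1 * k + k)%N by rewrite addnC -mulSn prednK.
rewrite exprD => e.
apply: (mulIf (expf_neq0 k y0)); rewrite mul1r -e. done.
Qed.

End P3.


Lemma odd_mod4 p : odd p -> p %% 4 = 1 \/ p %% 4 = 3.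
Proof.
move=> po; have : p %% 2 = 1 by rewrite modn2 po.
lia.
Qed.

Lemma FF1 p : p %% 4 = 1 -> FF p = p.-1.
Proof. by rewrite /FF => ->. Qed.
Lemma FF3 p : p %% 4 = 3 -> FF p = p.+1.
Proof. by rewrite /FF => ->. Qed.

Lemma div4_1 p : p %% 4 = 1 -> 4 %| p.-1.
Proof. move=> h; rewrite (divn_eq p 4) h addn1 /=. by rewrite dvdn_mull. Qed.

Lemma div4_3 p : p %% 4 = 3 -> 4 %| (p ^ 2).-1.
Proof. move=> h; rewrite (divn_eq p 4) h; set q := p %/ 4.
apply/dvdnP; exists ((4 * q + 2) * (q + 1)). rewrite expnS expn1. nia. Qed.

Definition Dcond (p k : nat) := forall z, ~~ (p %| gnorm z)%Z ->
  gcong p (gpow z k) (gpow (gconj z) k).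

Lemma UBp p g : prime p -> odd p -> (gnorm g == 1 %[mod p])%Z -> gcong p (gpow g (FF p)) gone.
Proof.
move=> pp po hg; case: (odd_mod4 po) => h.
- have [F pc cardF] := @pPrimePowerField p 1 pp isT.
  rewrite expn1 in cardF.
  have h4 : 4 %| #|F|.-1 by rewrite cardF div4_1.
  have [s hs] := sqrt_m1 h4 (m1_neq1 pc po).
  by rewrite FF1 //; apply: (UB1 pc po hs cardF).
- have [F pc cardF] := @pPrimePowerField p 2 pp isT.
  have h4 : 4 %| #|F|.-1 by rewrite cardF div4_3.
  have [j hj] := sqrt_m1 h4 (m1_neq1 pc po).
  by rewrite FF3 //; apply: (UB3 pc h hj).
Qed.

Lemma LBp p k : prime p -> odd p -> Dcond p k -> FF p %| k.
Proof.
move=> pp po hD; case: (odd_mod4 po) => h.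
- have [F pc cardF] := @pPrimePowerField p 1 pp isT.
  rewrite expn1 in cardF.
  have h4 : 4 %| #|F|.-1 by rewrite cardF div4_1.
  have [s hs] := sqrt_m1 h4 (m1_neq1 pc po).
  by rewrite FF1 //; apply: (LB1 pc po hs cardF).
- have [F pc cardF] := @pPrimePowerField p 2 pp isT.
  have h4 : 4 %| #|F|.-1 by rewrite cardF div4_3.
  have [j hj] := sqrt_m1 h4 (m1_neq1 pc po).
  by rewrite FF3 //; apply: (LB3 pc h hj cardF).
Qed.


Lemma gcong_one_pow m g q : gcong m g gone -> gcong m (gpow g q) gone.
Proof. by move=> h; rewrite -(gpow1 q); apply: gcong_pow. Qed.

Lemma gcong_one_mult m g a b : a %| b -> gcong m (gpow g a) gone -> gcong m (gpow g b) gone.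
Proof. by move=> /dvdnP[c ->] h; rewrite mulnC gpowM; apply: gcong_one_pow. Qed.

Section Lift.
Local Open Scope ring_scope.

Lemma dvdz_by (d a c : int) : a = c * d -> (d %| a)%Z.
Proof. by move=> ->; apply/dvdzP; exists c. Qed.

Lemma lift (m q : nat) g : (q * m %| m * m)%N -> gcong m g gone -> gcong (q * m) (gpow g q) gone.
Proof.
move=> hqm; rewrite gcongE /= => /andP[/dvdzP[u1 e1] /dvdzP[u2 e2]].
have E1 : g.1 = 1 + u1 * m%:Z by rewrite -e1; ring.
have E2 : g.2 = u2 * m%:Z by rewrite -e2; ring.
have claim : forall t : nat, gcong (m * m) (gpow g t)
    (1 + t%:Z * m%:Z * u1, t%:Z * m%:Z * u2).
  elim=> [|t IH].
    by rewrite gcongE /=; apply/andP; split; apply: (dvdz_by (c := 0)); ring.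
  apply: gcong_trans; first by rewrite gpowS; apply: (gcong_mul (gcong_refl _ _) IH).
  rewrite gcongE /gmul /= E1 E2; apply/andP; split.
    by apply: (dvdz_by (c := t%:Z * u1 * u1 - t%:Z * u2 * u2)); rewrite PoszM -addn1 PoszD; ring.
  by apply: (dvdz_by (c := t%:Z * u1 * u2 *+ 2)); rewrite PoszM -addn1 PoszD; ring.
have := gcong_dvd hqm (claim q); rewrite !gcongE /= => /andP[h1 h2].
apply/andP; split.
  have -> : (gpow g q).1 - 1 = ((gpow g q).1 - (1 + q%:Z * m%:Z * u1)) + (u1 * (q * m)%N%:Z).
    by rewrite PoszM; ring.
  by apply: dvdzD' => //; apply: dvdz_mull; apply: dvdzz.
have -> : (gpow g q).2 - 0 = ((gpow g q).2 - (q%:Z * m%:Z * u2)) + (u2 * (q * m)%N%:Z).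
  by rewrite PoszM; ring.
by apply: dvdzD' => //; apply: dvdz_mull; apply: dvdzz.
Qed.

End Lift.

Lemma UB_odd p g i : prime p -> odd p -> (gnorm g == 1 %[mod p])%Z ->
  gcong (p ^ i.+1) (gpow g (p ^ i * FF p)) gone.
Proof.
move=> pp po hg; elim: i => [|i IH].
  by rewrite expn1 expn0 mul1n; apply: UBp.
rewrite (expnSr p i) mulnAC gpowM (expnS p i.+1).
apply: lift => //.
by rewrite mulnC dvdn_pmul2l ?expn_gt0 ?prime_gt0 // dvdn_exp.
Qed.

Lemma UB_two g i : (gnorm g == 1 %[mod 2])%Z -> gcong (2 ^ i.+1) (gpow g (2 ^ i.+1)) gone.
Proof.
move=> hg; elim: i => [|i IH].
  rewrite expn1 /gpow /= gmul1r gcongE /gmul /=.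
  move: hg; rewrite eqz_mod_dvd /gnorm => hg.
  apply/andP; split.
    have -> : (g.1 * g.1 - g.2 * g.2 - 1 = (g.1 ^+ 2 + g.2 ^+ 2 - 1) - g.2 * g.2 * 2)%R by ring.
    by apply: dvdzB' => //; apply: (dvdz_by (c := (g.2 * g.2)%R)).
  by apply: (dvdz_by (c := (g.1 * g.2)%R)); ring.
rewrite (expnS 2 i.+1) {2}mulnC gpowM.
apply: lift => //.
by rewrite mulnC dvdn_pmul2l ?expn_gt0 // dvdn_exp.
Qed.

Lemma part_dvdz n (x : int) : 0 < n ->
  (forall p, prime p -> p %| n -> ((p ^ logn p n)%:Z %| x)%Z) -> (n%:Z %| x)%Z.
Proof.
move=> n0 H; rewrite dvdzE /=; apply/(dvdn_partP _ n0) => p.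
rewrite mem_primes => /and3P[pp _ pn]; rewrite p_part.
by have := H p pp pn; rewrite dvdzE.
Qed.

Lemma gcong_part n z w : 0 < n ->
  (forall p, prime p -> p %| n -> gcong (p ^ logn p n) z w) -> gcong n z w.
Proof.
move=> n0 H; rewrite gcongE; apply/andP; split; apply: part_dvdz => // p pp pn;
  by have := H p pp pn; rewrite gcongE => /andP[].
Qed.

Definition Exp n k := forall g, inGn n g -> gcong n (gpow g k) gone.

Lemma norm_mod_dvd (n m : nat) g : m %| n -> (gnorm g == 1 %[mod n])%Z -> (gnorm g == 1 %[mod m])%Z.
Proof. move=> mn; rewrite !eqz_mod_dvd; apply: dvdz_trans; by rewrite dvdzE. Qed.

Lemma Exp_crit n k : 0 < n ->
  (forall p, prime p -> p %| n -> odd p -> (p ^ (logn p n).-1 * FF p) %| k) ->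
  (2 %| n -> 2 ^ logn 2 n %| k) -> Exp n k.
Proof.
move=> n0 Hodd H2 g hg; apply: gcong_part => // p pp pn.
have e0 : 0 < logn p n by rewrite logn_gt0 mem_primes pp n0 pn.
case: (even_prime pp) => [p2|po].
  subst p; have := UB_two (logn 2 n).-1 (norm_mod_dvd pn hg).
  rewrite (prednK e0) => h; apply: gcong_one_mult h; exact: H2.
have := UB_odd (logn p n).-1 pp po (norm_mod_dvd pn hg).
rewrite (prednK e0) => h; apply: gcong_one_mult h; exact: Hodd.
Qed.


Lemma exists_min (P : nat -> Prop) : (exists m, P m) -> exists m, P m /\ forall m', P m' -> m <= m'.
Proof.
move=> [m0 Pm0]; apply: NNPP => nomin.
have H : forall N m, m <= N -> ~ P m.
  elim=> [|N IH] m hm Pm.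
    apply: nomin; exists m; split => // m' _; move: hm; rewrite leqn0 => /eqP ->. done.
  apply: nomin; exists m; split => // m' Pm'; rewrite leqNgt; apply/negP => lt.
  by apply: (IH m' _ Pm'); rewrite -ltnS (leq_trans lt hm).
exact: (H m0 m0 (leqnn _) Pm0).
Qed.

Lemma FF_le p : 1 < p -> 0 < FF p <= p.+1.
Proof. move=> p1; rewrite /FF; case: ifP => _; first lia. case: ifP => _; lia. Qed.

Lemma Exp_exists n : 0 < n -> Exp n (n * (n.+1)`!).
Proof.
move=> n0; apply: Exp_crit => //.
  move=> p pp pn po; apply: dvdn_mul.
    by apply: dvdn_trans (pfactor_dvdnn p n); apply: dvdn_exp2l; apply: leq_pred.
  have /andP[h0 h] := FF_le (prime_gt1 pp); apply: dvdn_fact; rewrite h0.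
  by rewrite /= (leq_trans h) // ltnS dvdn_leq.
by move=> _; apply: dvdn_mulr; apply: pfactor_dvdnn.
Qed.

Lemma Lambda_spec n : 0 < n -> is_exponent_Gn n (Lambda n).
Proof.
move=> n0; rewrite /Lambda; apply: epsilon_spec.
have M0 : 0 < n * (n.+1)`! by rewrite muln_gt0 n0 fact_gt0.
have [m [[m0 Em] mmin]] := exists_min (P := fun m => 0 < m /\ Exp n m)
  (ex_intro _ (n * (n.+1)`!) (conj M0 (Exp_exists n0))).
by exists m; split => //; split => // m' m'0 Em'; apply: mmin.
Qed.

Lemma Lambda_dvd n k : 0 < n -> 0 < k -> (Lambda n %| k <-> Exp n k).
Proof.
move=> n0 k0; have [L0 [EL Lmin]] := Lambda_spec n0; split.
  by move=> hd g hg; apply: (gcong_one_mult hd (EL g hg)).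
move=> Ek; rewrite /dvdn; have [r0|r0'] := posnP (k %% Lambda n); first by apply/eqP.
suff : Lambda n <= k %% Lambda n by rewrite leqNgt ltn_mod L0.
  apply: Lmin => // g hg.
  have e : gpow g k = gmul (gpow g (k %/ Lambda n * Lambda n)) (gpow g (k %% Lambda n)).
    by rewrite -gpowD -divn_eq.
  have h1 : gcong n (gpow g (k %/ Lambda n * Lambda n)) gone.
    by apply: (gcong_one_mult (dvdn_mull _ (dvdnn _)) (EL g hg)).
  apply: gcong_trans (Ek g hg); rewrite e.
  apply: gcong_sym; rewrite -[X in gcong _ _ X]gmul1.
  by apply: gcong_mul => //; apply: gcong_refl.
Qed.


Lemma coprimez_primes n (x : int) : 1 < n ->
  (forall q, prime q -> q %| n -> ~~ (q %| x)%Z) -> coprimez n x.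
Proof.
move=> n1 H; rewrite coprimezE /=.
have [x0|x0] := posnP `|x|%N.
  have := H _ (pdiv_prime n1) (pdiv_dvd n); rewrite dvdzE x0 dvdn0. done.
rewrite coprime_has_primes ?(ltnW n1) //; apply/hasPn => q.
rewrite mem_primes => /and3P[pq _ qx]; rewrite mem_primes pq /=.
apply/negP => /andP[_ qn]; have := H q pq qn; rewrite dvdzE qx. done.
Qed.

Lemma norm_cong m z w : gcong m z w -> (gnorm z == gnorm w %[mod m])%Z.
Proof.
move=> h; have := gcong_mul h (gcong_conj h); rewrite !gmul_conj /gcong /=.
by case/andP.
Qed.

Lemma one_notdvd q z : 1 < q -> gcong q z gone -> ~~ (q %| gnorm z)%Z.
Proof.
move=> q1 h; have := norm_cong h; rewrite eqz_mod_dvd => h1.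
have hn1 : gnorm gone = 1%R by rewrite /gnorm /=; ring.
rewrite hn1 in h1.
apply/negP => h2; have h3 := dvdzB' h2 h1.
have e3 : (gnorm z - (gnorm z - 1) = 1)%R by ring.
move: h3; rewrite e3.
by rewrite dvdzE /= dvdn1 => /eqP q1'; move: q1; rewrite q1'.
Qed.

Lemma quot_to_cong n z k : quot_pow_one n z k -> gcong n (gpow z k) (gpow (gconj z) k).
Proof.
move=> [w [h1 h2]].
have e : gmul (gpow (gconj z) k) (gpow (gmul z w) k) = gmul (gpow z k) (gpow (gmul (gconj z) w) k).
  by rewrite !gpow_mul !gmulA (gmulC (gpow (gconj z) k)).
have a : gcong n (gmul (gpow (gconj z) k) (gpow (gmul z w) k)) (gpow (gconj z) k).
  rewrite -[X in gcong _ _ X]gmul1r; apply: gcong_mul => //; exact: gcong_refl.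
have b : gcong n (gmul (gpow z k) (gpow (gmul (gconj z) w) k)) (gpow z k).
  rewrite -[X in gcong _ _ X]gmul1r; apply: gcong_mul; first exact: gcong_refl.
  by apply: gcong_one_pow.
by rewrite e in a; apply: gcong_trans (gcong_sym b) a.
Qed.

Lemma Exp_carm n : composite n -> Exp n (FF n) -> gauss_carmichael n.
Proof.
move=> hn E; split => // z cz; split => //; split => //.
have [u [v e]] := Bezoutz n (gnorm z).
move: cz; rewrite /coprimez => /eqP g1; rewrite g1 in e.
have nd : (n%:Z %| (gnorm z * v - 1)%R)%Z.
  have -> : (gnorm z * v - 1 = - u * n%:Z)%R by rewrite -e; ring.
  by apply: dvdz_mull; apply: dvdzz.
exists (gmul z (v, 0%R)); split.
  have -> : gmul (gconj z) (gmul z (v, 0%R)) = ((gnorm z * v)%R, 0%R).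
    rewrite gmulA (gmulC (gconj z)) gmul_conj /gmul /=; congr pair; ring.
  rewrite gcongE /= nd /=; rewrite subrr; exact: dvdz0'.
apply: E; rewrite /inGn eqz_mod_dvd.
have -> : (gnorm (gmul z (gmul z (v, 0%R))) - 1 = (gnorm z * v - 1) * (gnorm z * v + 1))%R.
  rewrite !gnormM /gnorm /=; ring.
by apply: dvdz_mulr.
Qed.

Lemma pow_exp (m : nat) (u1 u2 : int) (t : nat) :
  gcong (m * m) (gpow ((1 + u1 * m%:Z)%R, (u2 * m%:Z)%R) t)
    ((1 + t%:Z * m%:Z * u1)%R, (t%:Z * m%:Z * u2)%R).
Proof.
elim: t => [|t IH].
  by rewrite gcongE /=; apply/andP; split; apply: (dvdz_by (c := 0%R)); ring.
apply: gcong_trans; first by rewrite gpowS; apply: (gcong_mul (gcong_refl _ _) IH).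
rewrite gcongE /gmul /=; apply/andP; split.
  by apply: (dvdz_by (c := (t%:Z * u1 * u1 - t%:Z * u2 * u2)%R)); rewrite PoszM -addn1 PoszD; ring.
by apply: (dvdz_by (c := (t%:Z * u1 * u2 *+ 2)%R)); rewrite PoszM -addn1 PoszD; ring.
Qed.

Definition Ccond (n k : nat) := forall z, coprimez n (gnorm z) -> gcong n (gpow z k) (gpow (gconj z) k).

Lemma carm_C n : gauss_carmichael n -> Ccond n (FF n).
Proof. by move=> [_ H] z cz; have [_ [_ q]] := H z cz; apply: quot_to_cong. Qed.

Lemma C_L2 n k p : 0 < n -> Ccond n k -> prime p -> odd p -> p * p %| n -> p %| k.
Proof.
move=> n0 hC pp po hpp.
set c := n %/ (p * p); have en : n = c * p * p by rewrite -mulnA divnK.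
set m := c * p.
have m0 : 0 < m by move: n0; rewrite en /m muln_gt0 => /andP[].
have n1 : 1 < n.
  have := dvdn_leq n0 hpp; have := prime_gt1 pp; nia.
have hq : forall q, prime q -> q %| n -> q %| m.
  move=> q qp; rewrite en -/m Euclid_dvdM // => /orP[//|qd].
  by move: qd; rewrite dvdn_prime2 // => /eqP ->; rewrite /m dvdn_mull.
have nmm : n %| m * m by apply/dvdnP; exists c; rewrite en /m; ring.
pose z : gauss := ((1 + 0 * m%:Z)%R, (1 * m%:Z)%R).
have cz : coprimez n (gnorm z).
  apply: coprimez_primes => // q qp qn; apply: one_notdvd; first exact: prime_gt1.
  rewrite gcongE /= !mul1r !mul0r addr0 subrr dvdz0' /= subr0.
  by rewrite dvdzE /= hq.
have h := hC z cz.
have h1 := gcong_dvd nmm (pow_exp m 0 1 k).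
have h2 := gcong_dvd nmm (pow_exp m 0 (-1) k).
have ez : gconj z = ((1 + 0 * m%:Z)%R, (-1 * m%:Z)%R) by rewrite /gconj /z /=; congr pair; ring.
rewrite ez in h.
have := gcong_trans (gcong_trans (gcong_sym h1) h) h2.
rewrite gcongE /= => /andP[_].
have -> : (k%:Z * m%:Z * 1 - k%:Z * m%:Z * -1 = (m * (2 * k))%N%:Z)%R by rewrite !PoszM; ring.
rewrite dvdzE /= {1}en -/m dvdn_pmul2l // Gauss_dvdr //.
by rewrite prime_coprime // dvdn_prime2 //; apply/negP => /eqP p2; move: po; rewrite p2.
Qed.

Lemma C_D n k p : 1 < n -> Ccond n k -> prime p -> p %| n -> Dcond p k.
Proof.
move=> n1 hC pp pn z0 nz0.
have n0 : 0 < n by apply: ltnW.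
set e := logn p n; set m := n %/ p ^ e.
have en : n = m * p ^ e by rewrite divnK // pfactor_dvdnn.
have m0 : 0 < m by move: n0; rewrite en muln_gt0 => /andP[].
have pm : ~~ (p %| m).
  apply/negP => /dvdnP[c ec].
  have : p ^ e.+1 %| n by rewrite en ec expnS mulnAC -mulnA dvdn_mull ?dvdnn // mulnC.
  by rewrite pfactor_dvdn // ltnn.
have hq : forall q, prime q -> q %| n -> q != p -> q %| m.
  move=> q qp; rewrite en Euclid_dvdM // => /orP[//|].
  by rewrite Euclid_dvdX // dvdn_prime2 // => /andP[/eqP ->]; rewrite eqxx.
have cop : gcdz m p = 1%R.
  apply/eqP; rewrite -/(coprimez m p) coprimezE /= coprime_sym prime_coprime //.
have [u [v euv]] := Bezoutz m p; rewrite cop in euv.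
set t := (u * m%:Z)%R.
have et : t = (1 - v * p%:Z)%R by rewrite /t -euv; ring.
pose z : gauss := ((1 + t * (z0.1 - 1))%R, (t * z0.2)%R).
have zz0 : gcong p z z0.
  rewrite gcongE /= et; apply/andP; split.
    by apply: (dvdz_by (c := (- v * (z0.1 - 1))%R)); ring.
  by apply: (dvdz_by (c := (- v * z0.2)%R)); ring.
have cz : coprimez n (gnorm z).
  apply: coprimez_primes => // q qp qn.
  have [qe|qne] := eqVneq q p.
    rewrite qe; apply/negP => h; move: nz0; rewrite -(rpredBl _ h) => /negP; apply.
    have := norm_cong zz0; rewrite eqz_mod_dvd => h'.
    by have := dvdzB' h h'; rewrite opprB addrC subrK.
  apply: one_notdvd; first exact: prime_gt1.
  have qt : (q%:Z %| t)%Z by rewrite /t; apply: dvdz_mull; rewrite dvdzE /= hq.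
  rewrite gcongE /=; apply/andP; split.
    by rewrite addrC addKr; apply: dvdz_mulr.
  by rewrite subr0; apply: dvdz_mulr.
have h := gcong_dvd pn (hC z cz).
apply: gcong_trans (gcong_pow k (gcong_conj zz0)).
apply: gcong_trans h.
exact: gcong_pow k (gcong_sym zz0).
Qed.


Lemma FF_4 p : odd p -> 4 %| FF p.
Proof.
move=> po; case: (odd_mod4 po) => h; [rewrite FF1 // | rewrite FF3 //].
  exact: div4_1.
apply/dvdnP; exists (p %/ 4).+1; lia.
Qed.

Lemma cop_FF p : odd p -> coprime p (FF p).
Proof.
move=> po; case: (odd_mod4 po) => h; [rewrite FF1 // | rewrite FF3 //].
  have p0 : 0 < p by case: (p) po.
  by rewrite -{1}(prednK p0) coprimeSn.
exact: coprimenS.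
Qed.

Lemma FF_even n : n %% 4 = 0 \/ n %% 4 = 2 -> FF n = n.
Proof. by rewrite /FF => [[]] ->. Qed.

Lemma FF_n_odd n : odd n -> FF n = n.-1 \/ FF n = n.+1.
Proof. by move=> no; case: (odd_mod4 no) => h; [left; rewrite FF1|right; rewrite FF3]. Qed.

Lemma sqf_log n p : squarefree_nat n -> 0 < n -> prime p -> p %| n -> logn p n = 1.
Proof.
move=> sq n0 pp pn.
have pl : p < n.+1 by rewrite ltnS dvdn_leq.
have := forallP sq (Ordinal pl); rewrite /= pp /= => np2.
have e0 : 0 < logn p n by rewrite logn_gt0 mem_primes pp n0 pn.
move: np2; rewrite pfactor_dvdn // -ltnNge ltnS => e1.
by apply/eqP; rewrite eqn_leq e1 e0.
Qed.

Lemma iii_Exp n : composite n ->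
  (forall p : nat, prime p -> p %| n -> FF p %| FF n) ->
  ((odd n && squarefree_nat n) ||
       ((4 %| n) && ((n %/ 4 \in [:: 2; 3; 5]) || ~~ prime (n %/ 4)))) ->
  Exp n (FF n).
Proof.
move=> /andP[n1 _] H; have n0 : 0 < n by apply: ltnW.
case/orP => [/andP[no sq]|/andP[n4 _]].
  apply: Exp_crit => //.
    by move=> p pp pn po; rewrite (sqf_log sq) // expn0 mul1n; apply: H.
  by rewrite dvdn2 no.
have Fn : FF n = n by apply: FF_even; left; apply/eqP.
apply: Exp_crit => //.
  move=> p pp pn po; rewrite Fn Gauss_dvd.
    by rewrite (dvdn_trans _ (pfactor_dvdnn p n)) ?dvdn_exp2l ?leq_pred //= -Fn H.
  by apply: coprimeXl; apply: cop_FF.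
by move=> _; rewrite Fn pfactor_dvdnn.
Qed.

Lemma C_iii n : composite n -> Ccond n (FF n) ->
  (forall p : nat, prime p -> p %| n -> FF p %| FF n) /\
  ((odd n && squarefree_nat n) ||
       ((4 %| n) && ((n %/ 4 \in [:: 2; 3; 5]) || ~~ prime (n %/ 4)))).
Proof.
move=> hn hC; have /andP[n1 np] := hn; have n0 : 0 < n by apply: ltnW.
have H1 : forall p, prime p -> p %| n -> odd p -> FF p %| FF n.
  move=> p pp pn po; apply: (LBp pp po); exact: C_D n1 hC pp pn.
have H2 : forall p, prime p -> odd p -> p * p %| n -> p %| FF n.
  by move=> p pp po ppn; apply: (C_L2 n0 hC pp po ppn).
have E4 : 2 %| n -> 4 %| n.
  move=> n2; apply/negPn/negP => n4.
  have m4 : n %% 4 = 2.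
    move: n2 n4; rewrite /dvdn => /eqP n2 n4; lia.
  have Fn : FF n = n by apply: FF_even; right.
  set m := n %/ 2.
  have mo : odd m.
    have : m %% 2 = 1 by rewrite /m; lia.
    by rewrite modn2; case: (odd m).
  have m1 : 1 < m.
    rewrite ltnNge; apply/negP => m1; move: np; rewrite (_ : n = 2); last by rewrite /m in m1; lia.
    done.
  have qp := pdiv_prime m1.
  have qo : odd (pdiv m).
    case: (even_prime qp) => // q2; move: (pdiv_dvd m); rewrite q2 dvdn2 mo. done.
  have qn : pdiv m %| n by apply: dvdn_trans (pdiv_dvd m) _; rewrite /m; apply/dvdnP; exists 2; lia.
  have := dvdn_trans (FF_4 qo) (H1 _ qp qn qo); rewrite Fn => h; by rewrite h in n4.
split.
  move=> p pp pn; case: (even_prime pp) => [p2|po]; last exact: H1.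
  subst p; have n4 := E4 pn; rewrite (@FF_even n); last by left; apply/eqP.
  by rewrite (@FF_even 2) //; right.
case: (boolP (odd n)) => no.
  apply/orP; left; rewrite /=; apply/forallP => [[p pl]] /=; apply/implyP => pp.
  apply/negP => p2n.
  have pn : p %| n by apply: dvdn_trans p2n; rewrite dvdn_exp.
  have po : odd p.
    case: (even_prime pp) => // p2; move: pn; rewrite p2 dvdn2 no. done.
  have := H2 p pp po; rewrite mulnn => /(_ p2n) hp.
  have p1 := prime_gt1 pp.
  case: (FF_n_odd no) => e; rewrite e in hp.
    have : p %| n.-1 + 1 by rewrite addn1 prednK.
    by rewrite dvdn_addr // dvdn1 => /eqP p1'; rewrite p1' in p1.
  have : p %| n.+1 by [].
  by rewrite -addn1 dvdn_addr // dvdn1 => /eqP p1'; rewrite p1' in p1.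
have n4 : 4 %| n by apply: E4; rewrite dvdn2 no.
rewrite n4 /= orbC; apply/orP; case: (boolP (prime (n %/ 4))) => qp; [right|by left].
set q := n %/ 4 in qp *.
have en : n = q * 4 by rewrite /q divnK.
have Fn : FF n = n by apply: FF_even; left; apply/eqP.
have [q2|qo] := even_prime qp; first by rewrite q2.
have qn : q %| n by rewrite en dvdn_mulr.
have := H1 q qp qn qo; rewrite Fn en Gauss_dvdr; last by rewrite coprime_sym cop_FF.
move=> /dvdn_leq h; have {}h := h isT.
have q1 := prime_gt1 qp.
rewrite !inE.
case: (FF_n_odd qo) => e; rewrite e in h.
  have : q <= 5 by lia.
  by move: qo q1; case: q {en qp e h qn} => [|[|[|[|[|[|]]]]]].
have : q <= 3 by lia.
by move: qo q1; case: q {en qp e h qn} => [|[|[|[|]]]].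
Qed.


Theorem mainTheorem10 (n : nat) (hn : composite n) :
  (gauss_carmichael n <-> Lambda n %| FF n) /\
  (Lambda n %| FF n <->
     ((forall p : nat, prime p -> p %| n -> FF p %| FF n) /\
      ((odd n && squarefree_nat n) ||
       ((4 %| n) && ((n %/ 4 \in [:: 2; 3; 5]) || ~~ prime (n %/ 4)))))).
Proof.
have /andP[n1 _] := hn; have n0 : 0 < n by apply: ltnW.
have /andP[F0 _] := FF_le n1.
have eq2 := Lambda_dvd n0 F0.
have ci := fun h => C_iii hn (carm_C h).
split; split.
- by move=> h; apply/eq2; have [h1 h2] := ci h; apply: iii_Exp.
- by move=> /eq2 h; apply: Exp_carm.
- by move=> /eq2 h; apply: ci; apply: Exp_carm.
- by move=> [h1 h2]; apply/eq2; apply: iii_Exp.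
Qed.
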